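(* Let $p>1$, $N\ge m$, and let $S$ be the set of pairs $(A,y)\in\mathbb R^{m\times N}\times\mathbb R^m$ such that every $m\times m$ submatrix of $A$ is invertible and $y\neq0$. For every $(A,y)\in S$: (i) the unique optimal solution $x^*$ of $\min\|x\|_p$ s.t. $Ax=y$ satisfies $|\mathrm{supp}(x^* )|\ge N-m+1$; (ii) if $0<\varepsilon<\|y\|_2$, the unique optimal solution $x^*$ of $\min\|x\|_p$ s.t. $\|Ax-y\|_2\le\varepsilon$ satisfies $|\mathrm{supp}(x^* )|\ge N-m+1$; (iii) for any $\lambda>0$, the unique optimal solution $x^*$ of $\min_x \frac12\|Ax-y\|_2^2+\lambda\|x\|_p^p$ satisfies $|\mathrm{supp}(x^* )|\ge N-m+1$; (iv) for any $r>0$, $\lambda_1>0$, $\lambda_2\ge0$, every nonzero optimal solution $x^*$ of $\min_x \frac12\|Ax-y\|_2^2+\lambda_1\|x\|_p^r+\lambda_2\|x\|_2^2$ satisfies $|\mathrm{supp}(x^* )|\ge N-m+1$.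
   Context: $\|x\|_p:=(\sum_i|x_i|^p)^{1/p}$; $\mathrm{supp}(x)=\{i: x_i\neq0\}$ and $|\cdot|$ denotes cardinality. *)

(* Defs.v *)
From Stdlib Require Import Reals Lra Lia List.
Import ListNotations.
Open Scope R_scope.

(* Vectors in R^n are functions nat -> R; only indices < n are meaningful.
   Matrices in R^{m x n} are functions nat -> nat -> R (row, column). *)

Fixpoint rsum (n : nat) (f : nat -> R) : R :=
  match n with
  | O => 0
  | S k => rsum k f + f k
  end.

Definition isvec (n : nat) (x : nat -> R) : Prop :=
  forall i, (n <= i)%nat -> x i = 0.

(* a^q for a >= 0 and q > 0, with the convention 0^q = 0
   (Stdlib's Rpower 0 q = 1, which is not the intended value). *)
Definition powR (a q : R) : R :=
  match Rle_dec a 0 with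
  | left _ => 0
  | right _ => Rpower a q
  end.

Definition pnorm (p : R) (n : nat) (x : nat -> R) : R :=
  powR (rsum n (fun i => powR (Rabs (x i)) p)) (/ p).

Definition norm2 (n : nat) (x : nat -> R) : R :=
  sqrt (rsum n (fun i => x i * x i)).

Definition matvec (n : nat) (A : nat -> nat -> R) (x : nat -> R) : nat -> R :=
  fun i => rsum n (fun j => A i j * x j).

Definition resid (n : nat) (A : nat -> nat -> R) (x y : nat -> R) : nat -> R :=
  fun i => matvec n A x i - y i.

Definition supp_card (n : nat) (x : nat -> R) : nat :=
  length (filter (fun i => if Req_EM_T (x i) 0 then false else true) (seq 0 n)).

Definition invertible (m : nat) (M : nat -> nat -> R) : Prop :=
  exists B : nat -> nat -> R,
    forall i k, (i < m)%nat -> (k < m)%nat ->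
      rsum m (fun j => M i j * B j k) = (if Nat.eq_dec i k then 1 else 0) /\
      rsum m (fun j => B i j * M j k) = (if Nat.eq_dec i k then 1 else 0).

Definition all_square_submatrices_invertible (m N : nat) (A : nat -> nat -> R) : Prop :=
  forall c : nat -> nat,
    (forall j k, (j < k)%nat -> (k < m)%nat -> (c j < c k)%nat) ->
    (forall j, (j < m)%nat -> (c j < N)%nat) ->
    invertible m (fun i j => A i (c j)).

Definition nonzero_vec (m : nat) (y : nat -> R) : Prop :=
  exists i, (i < m)%nat /\ y i <> 0.

Definition is_optimal (n : nat) (feas : (nat -> R) -> Prop) (f : (nat -> R) -> R)
  (x : nat -> R) : Prop :=
  isvec n x /\ feas x /\
  forall z, isvec n z -> feas z -> f x <= f z.

(* Main.v *)
Require Import Defs.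
From Stdlib Require Import Reals Lra Lia List.
Import ListNotations.
Open Scope R_scope.

Lemma rsum_ext n f g : (forall i, (i < n)%nat -> f i = g i) -> rsum n f = rsum n g.
Proof. induction n; simpl; intros H; auto. rewrite IHn by (intros; apply H; lia). rewrite H by lia; auto. Qed.

Lemma rsum_le n f g : (forall i, (i < n)%nat -> f i <= g i) -> rsum n f <= rsum n g.
Proof. induction n; simpl; intros H; [lra|]. assert (rsum n f <= rsum n g) by (apply IHn; intros; apply H; lia).
  assert (f n <= g n) by (apply H; lia). lra. Qed.

Lemma rsum_plus n f g : rsum n (fun i => f i + g i) = rsum n f + rsum n g.
Proof. induction n; simpl; [lra|]. rewrite IHn; lra. Qed.

Lemma rsum_scal n c f : rsum n (fun i => c * f i) = c * rsum n f.
Proof. induction n; simpl; [lra|]. rewrite IHn; lra. Qed.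

Lemma rsum_zero n : rsum n (fun _ => 0) = 0.
Proof. induction n; simpl; [lra|]. rewrite IHn; lra. Qed.

Lemma rsum_nonneg n f : (forall i, (i < n)%nat -> 0 <= f i) -> 0 <= rsum n f.
Proof. intros H. rewrite <- (rsum_zero n). apply rsum_le; auto. Qed.

Lemma rsum_delta n j g : (j < n)%nat -> rsum n (fun i => if Nat.eq_dec i j then g i else 0) = g j.
Proof. induction n; simpl; intros H; [lia|].
  destruct (Nat.eq_dec n j).
  - subst. rewrite (rsum_ext _ _ (fun _ => 0)). rewrite rsum_zero; lra.
    intros i Hi. destruct (Nat.eq_dec i j); [lia|auto].
  - rewrite IHn by lia. lra. Qed.

Lemma rsum_delta' n j g : (j < n)%nat -> rsum n (fun i => if Nat.eq_dec j i then g i else 0) = g j.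
Proof. intros H. rewrite <- (rsum_delta n j g H). apply rsum_ext. intros i _.
  destruct (Nat.eq_dec j i), (Nat.eq_dec i j); auto; lia. Qed.

Lemma rsum_swap n m f : rsum n (fun i => rsum m (fun k => f i k)) = rsum m (fun k => rsum n (fun i => f i k)).
Proof. induction n; simpl. rewrite rsum_zero; auto.
  rewrite IHn. rewrite <- rsum_plus. auto. Qed.

Lemma Rpower_pos x y : 0 < Rpower x y.
Proof. unfold Rpower. apply exp_pos. Qed.

Lemma powR_nonneg a q : 0 <= powR a q.
Proof. unfold powR. destruct (Rle_dec a 0); [lra|]. left; apply Rpower_pos. Qed.

Lemma powR_pos a q : 0 < a -> powR a q = Rpower a q.
Proof. intros. unfold powR. destruct (Rle_dec a 0); [lra|auto]. Qed.

Lemma powR_zero q : powR 0 q = 0.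
Proof. unfold powR. destruct (Rle_dec 0 0); [auto|lra]. Qed.

Lemma powR_mult u v q : 0 <= u -> 0 <= v -> powR (u * v) q = powR u q * powR v q.
Proof. intros Hu Hv. destruct Hu as [Hu|Hu]; [|subst; rewrite Rmult_0_l, powR_zero; lra].
  destruct Hv as [Hv|Hv]; [|subst; rewrite Rmult_0_r, powR_zero; lra].
  rewrite !powR_pos; try apply Rmult_lt_0_compat; auto.
  rewrite Rpower_mult_distr; auto. Qed.

Lemma powR_lt u v q : 0 < q -> 0 <= u < v -> powR u q < powR v q.
Proof. intros Hq [Hu Huv]. rewrite (powR_pos v) by lra.
  destruct Hu as [Hu|Hu]; [|subst; rewrite powR_zero; apply Rpower_pos].
  rewrite powR_pos by lra. apply Rlt_Rpower_l; lra. Qed.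

Lemma Rpower_le1 x p : 1 <= p -> 0 < x <= 1 -> Rpower x p <= x.
Proof. intros Hp Hx. unfold Rpower.
  assert (ln x <= 0). { destruct Hx as [H0 [H1|H1]]. left. rewrite <- ln_1. apply ln_increasing; lra. subst; rewrite ln_1; lra. }
  rewrite <- (exp_ln x) at 2 by lra.
  destruct (Req_dec (p * ln x) (ln x)) as [E|E]. rewrite E; lra.
  left; apply exp_increasing. nra. Qed.

Lemma powR_pnorm p n x : 0 < p -> powR (pnorm p n x) p = rsum n (fun i => powR (Rabs (x i)) p).
Proof. intros Hp. unfold pnorm. set (S := rsum n _).
  assert (0 <= S) by (apply rsum_nonneg; intros; apply powR_nonneg).
  destruct H as [H|H].
  - rewrite (powR_pos S) by auto. rewrite powR_pos by apply Rpower_pos.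
    rewrite Rpower_mult. replace (/ p * p) with 1 by (field; lra). apply Rpower_1; auto.
  - rewrite <- H. rewrite powR_zero. apply powR_zero. Qed.

Lemma pnorm_nonneg p n x : 0 <= pnorm p n x.
Proof. apply powR_nonneg. Qed.

Lemma pnorm_lt p n x z : 0 < p ->
  rsum n (fun i => powR (Rabs (z i)) p) < rsum n (fun i => powR (Rabs (x i)) p) ->
  pnorm p n z < pnorm p n x.
Proof. intros Hp H. unfold pnorm. apply powR_lt. apply Rinv_0_lt_compat; auto.
  split; auto. apply rsum_nonneg; intros; apply powR_nonneg. Qed.

Lemma norm2_sq n x : norm2 n x ^ 2 = rsum n (fun i => x i * x i).
Proof. unfold norm2. apply pow2_sqrt. apply rsum_nonneg. intros; nra. Qed.

Lemma small_t p C D b : 1 < p -> 0 <= C -> 0 < D -> 0 < b ->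
  exists t, 0 < t <= b /\ C * Rpower t (p - 1) < D.
Proof. intros Hp HC HD Hb.
  set (s := Rmin (Rpower b (p-1)) (D / (C + 1))).
  assert (Hs : 0 < s). { unfold s. apply Rmin_glb_lt. apply Rpower_pos. apply Rdiv_lt_0_compat; lra. }
  exists (Rpower s (/ (p - 1))). repeat split.
  - apply Rpower_pos.
  - assert (E : Rpower (Rpower b (p-1)) (/ (p-1)) = b).
    { rewrite Rpower_mult. replace ((p - 1) * / (p - 1)) with 1 by (field; lra). apply Rpower_1; auto. }
    rewrite <- E at 1. apply Rle_Rpower_l. left; apply Rinv_0_lt_compat; lra.
    split; auto. apply Rmin_l.
  - rewrite Rpower_mult. replace (/ (p - 1) * (p - 1)) with 1 by (field; lra). rewrite Rpower_1 by auto.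
    assert (s <= D / (C+1)) by apply Rmin_r.
    assert (C * s <= C * (D / (C+1))) by (apply Rmult_le_compat_l; auto).
    assert (C * (D / (C+1)) < D). { unfold Rdiv. apply (Rmult_lt_reg_r (C+1)); [lra|].
      field_simplify; try lra. }
    lra. Qed.

Fixpoint zc (n : nat) (x : nat -> R) : nat :=
  match n with O => O | S k => (zc k x + if Req_EM_T (x k) 0 then 1 else 0)%nat end.

Lemma supp_zc n x : (supp_card n x + zc n x)%nat = n.
Proof. induction n; simpl; auto. unfold supp_card in *. rewrite seq_S, filter_app, length_app.
  simpl. destruct (Req_EM_T (x n) 0); simpl; lia. Qed.

Lemma choose_C n : forall m x, (m <= zc n x)%nat -> exists c : nat -> nat,
  (forall j k, (j < k)%nat -> (k < m)%nat -> (c j < c k)%nat) /\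
  (forall k, (k < m)%nat -> (c k < n)%nat /\ x (c k) = 0).
Proof. induction n; simpl; intros m x H.
  - exists (fun k => k). split; intros; lia.
  - destruct (Req_EM_T (x n) 0) as [E|E].
    + destruct m as [|m']. exists (fun k => k). split; intros; lia.
      destruct (IHn m' x ltac:(lia)) as [c [H1 H2]].
      exists (fun k => if Nat.ltb k m' then c k else n). split.
      * intros j k Hjk Hk. destruct (Nat.ltb_spec j m'), (Nat.ltb_spec k m'); try lia.
        apply H1; lia. apply H2; lia.
      * intros k Hk. destruct (Nat.ltb_spec k m'). destruct (H2 k); auto; split; auto. split; auto.
    + destruct (IHn m x ltac:(lia)) as [c [H1 H2]]. exists c. split; auto.
      intros k Hk. destruct (H2 k Hk); split; auto. Qed.

Lemma solve_lemma m N A c w :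
  (forall k, (k < m)%nat -> (c k < N)%nat) ->
  invertible m (fun i j => A i (c j)) ->
  exists u, isvec N u /\ (forall l, (l < m)%nat -> matvec N A u l = w l) /\
    (forall i, (forall k, (k < m)%nat -> c k <> i) -> u i = 0).
Proof. intros Hc [B HB].
  set (e := fun k => rsum m (fun l => B k l * w l)).
  exists (fun i => rsum m (fun k => if Nat.eq_dec i (c k) then e k else 0)). split; [|split].
  - intros i Hi. transitivity (rsum m (fun _ => 0)); [|apply rsum_zero]. apply rsum_ext. intros k Hk.
    destruct (Nat.eq_dec i (c k)); auto. unfold isvec in *. specialize (Hc k Hk); lia.
  - intros l Hl. unfold matvec.
    transitivity (rsum N (fun i => rsum m (fun k => if Nat.eq_dec i (c k) then A l i * e k else 0))).
    { apply rsum_ext; intros i _. rewrite <- rsum_scal. apply rsum_ext; intros k _.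
      destruct (Nat.eq_dec i (c k)); lra. }
    rewrite rsum_swap.
    transitivity (rsum m (fun k => rsum m (fun l' => (A l (c k) * B k l') * w l'))).
    { apply rsum_ext; intros k Hk. rewrite rsum_delta by auto. unfold e. rewrite <- rsum_scal.
      apply rsum_ext; intros; lra. }
    rewrite rsum_swap.
    transitivity (rsum m (fun l' => if Nat.eq_dec l l' then w l' else 0)).
    { apply rsum_ext; intros l' Hl'. rewrite (rsum_ext m _ (fun k => w l' * (A l (c k) * B k l'))) by (intros; lra).
      rewrite rsum_scal. destruct (HB l l' Hl Hl') as [E _]. rewrite E.
      destruct (Nat.eq_dec l l'); lra. }
    apply rsum_delta'; auto.
  - intros i Hi. transitivity (rsum m (fun _ => 0)); [|apply rsum_zero]. apply rsum_ext. intros k Hk.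
    destruct (Nat.eq_dec i (c k)); auto. exfalso; apply (Hi k Hk); auto. Qed.

Lemma rsum_minus n f g : rsum n (fun i => f i - g i) = rsum n f - rsum n g.
Proof. induction n; simpl; [lra|]. rewrite IHn; lra. Qed.

Lemma matvec_lin N A x d t l :
  matvec N A (fun i => x i + t * d i) l = matvec N A x l + t * matvec N A d l.
Proof. unfold matvec. rewrite <- rsum_scal, <- rsum_plus. apply rsum_ext; intros; lra. Qed.

Lemma descent p m N A xs j c :
  1 < p -> isvec N xs -> (j < N)%nat -> xs j <> 0 ->
  (forall k, (k < m)%nat -> (c k < N)%nat /\ xs (c k) = 0) ->
  invertible m (fun i k => A i (c k)) ->
  exists z, isvec N z /\ (forall l, (l < m)%nat -> matvec N A z l = matvec N A xs l) /\
   rsum N (fun i => powR (Rabs (z i)) p) < rsum N (fun i => powR (Rabs (xs i)) p) /\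
   rsum N (fun i => z i * z i) <= rsum N (fun i => xs i * xs i).
Proof.
  intros Hp Hxs Hj Hxj Hc Hinv.
  destruct (solve_lemma m N A c (fun l => A l j * xs j)) as [u [Hu [Hu1 Hu2]]].
  { intros k Hk; apply Hc; auto. } { auto. }
  assert (Huj : u j = 0). { apply Hu2. intros k Hk E. destruct (Hc k Hk) as [_ E2]. rewrite E in E2; auto. }
  assert (Hui : forall i, i <> j -> xs i <> 0 -> u i = 0).
  { intros i Hij Hi. apply Hu2. intros k Hk E. destruct (Hc k Hk) as [_ E2]. rewrite E in E2; auto. }
  set (d := fun i => u i - (if Nat.eq_dec i j then xs j else 0)).
  assert (Hdj : d j = - xs j). { unfold d. rewrite Huj. destruct (Nat.eq_dec j j); [lra|lia]. }
  assert (Hdi : forall i, i <> j -> d i = u i). { intros i Hi. unfold d. destruct (Nat.eq_dec i j); [lia|lra]. }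
  set (K := rsum N (fun i => powR (Rabs (d i)) p)).
  set (K2 := rsum N (fun i => d i * d i)).
  set (D := powR (Rabs (xs j)) p).
  assert (HK : 0 <= K) by (apply rsum_nonneg; intros; apply powR_nonneg).
  assert (HK2 : 0 <= K2) by (apply rsum_nonneg; intros; nra).
  assert (Hax : 0 < Rabs (xs j)) by (apply Rabs_pos_lt; auto).
  assert (HD : 0 < D) by (unfold D; rewrite powR_pos by auto; apply Rpower_pos).
  assert (Hx2 : 0 < xs j * xs j) by nra.
  set (b := Rmin 1 (2 * (xs j * xs j) / (K2 + 1))).
  assert (Hb : 0 < b). { unfold b. apply Rmin_glb_lt. lra. apply Rdiv_lt_0_compat; lra. }
  destruct (small_t p K D b Hp HK HD Hb) as [t [[Ht0 Htb] HtK]].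
  assert (Ht1 : t <= 1) by (assert (b <= 1) by apply Rmin_l; lra).
  assert (Ht2 : t <= 2 * (xs j * xs j) / (K2 + 1)) by (assert (b <= 2 * (xs j * xs j) / (K2 + 1)) by apply Rmin_r; lra).
  exists (fun i => xs i + t * d i). split; [|split; [|split]].
  - intros i Hi. rewrite Hxs by auto. unfold d. rewrite Hu by auto.
    destruct (Nat.eq_dec i j); [lia|lra].
  - intros l Hl. rewrite matvec_lin.
    assert (matvec N A d l = 0); [|rewrite H; lra].
    unfold matvec, d. rewrite (rsum_ext N _ (fun i => A l i * u i - (if Nat.eq_dec i j then A l i * xs j else 0)))
      by (intros; destruct (Nat.eq_dec i j); lra).
    rewrite rsum_minus. rewrite rsum_delta by auto. fold (matvec N A u l). rewrite Hu1 by auto. lra.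
  - assert (Hpt : forall i, powR (Rabs (xs i + t * d i)) p <=
       powR (Rabs (xs i)) p + Rpower t p * powR (Rabs (d i)) p - (if Nat.eq_dec i j then t * D else 0)).
    { intros i. destruct (Nat.eq_dec i j) as [->|Hij].
      - rewrite Hdj. replace (xs j + t * - xs j) with ((1 - t) * xs j) by ring.
        rewrite Rabs_mult, (Rabs_pos_eq (1 - t)) by lra. rewrite powR_mult by (try lra; apply Rabs_pos).
        fold D. assert (powR (1 - t) p <= 1 - t).
        { destruct (Req_dec t 1) as [E|E]. rewrite E, Rminus_diag, powR_zero; lra.
          rewrite powR_pos by lra. apply Rpower_le1; lra. }
        assert (0 <= Rpower t p * powR (Rabs (- xs j)) p) by (apply Rmult_le_pos; [left; apply Rpower_pos|apply powR_nonneg]).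
        nra.
      - rewrite (Hdi i Hij). destruct (Req_dec (xs i) 0) as [E|E].
        + rewrite E, Rplus_0_l, Rabs_R0, powR_zero, Rabs_mult, (Rabs_pos_eq t) by lra.
          rewrite powR_mult by (try lra; apply Rabs_pos). rewrite (powR_pos t) by lra. lra.
        + rewrite (Hui i Hij E), Rmult_0_r, Rplus_0_r, Rabs_R0, powR_zero. lra. }
    eapply Rle_lt_trans. apply rsum_le. intros i _. apply Hpt.
    rewrite rsum_minus, rsum_plus, rsum_scal, (rsum_delta N j (fun _ => t * D)) by auto. fold K.
    assert (Rpower t p = t * Rpower t (p - 1)).
    { replace p with (1 + (p - 1)) at 1 by ring. rewrite Rpower_plus, Rpower_1; auto. }
    rewrite H. assert (t * (K * Rpower t (p - 1)) < t * D) by (apply Rmult_lt_compat_l; auto).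
    lra.
  - rewrite (rsum_ext N _ (fun i => xs i * xs i + t * t * (d i * d i) - (if Nat.eq_dec i j then 2 * t * (xs j * xs j) else 0))).
    + rewrite rsum_minus, rsum_plus, rsum_scal, (rsum_delta N j (fun _ => _)) by auto. fold K2.
      assert (t * K2 <= 2 * (xs j * xs j)).
      { assert (t * (K2 + 1) <= 2 * (xs j * xs j)).
        { apply (Rmult_le_reg_r (/ (K2 + 1))). apply Rinv_0_lt_compat; lra.
          rewrite Rmult_assoc, Rinv_r by lra. unfold Rdiv in Ht2. lra. }
        nra. }
      nra.
    + intros i _. destruct (Nat.eq_dec i j) as [->|Hij]. rewrite Hdj; ring.
      rewrite (Hdi i Hij). destruct (Req_dec (xs i) 0) as [E|E]. rewrite E; ring.
      rewrite (Hui i Hij E); ring.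
Qed.

Lemma find_nz n x : (exists j, (j < n)%nat /\ x j <> 0) \/ (forall i, (i < n)%nat -> x i = 0).
Proof. induction n. right; intros; lia.
  destruct IHn as [[j [Hj E]]|H]. left; exists j; split; auto.
  destruct (Req_EM_T (x n) 0). right; intros i Hi. destruct (Nat.eq_dec i n); subst; auto. apply H; lia.
  left; exists n; split; auto. Qed.

Lemma rsum_ge_term n f i : (forall k, (k < n)%nat -> 0 <= f k) -> (i < n)%nat -> f i <= rsum n f.
Proof. induction n; simpl; intros H Hi; [lia|].
  assert (0 <= rsum n f) by (apply rsum_nonneg; intros; apply H; lia).
  destruct (Nat.eq_dec i n). subst; lra. assert (f i <= rsum n f) by (apply IHn; [intros; apply H|]; lia).
  assert (0 <= f n) by (apply H; lia). lra. Qed.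

Lemma matvec_zero N A x l : (forall i, (i < N)%nat -> x i = 0) -> matvec N A x l = 0.
Proof. intros H. unfold matvec. transitivity (rsum N (fun _ => 0)); [|apply rsum_zero].
  apply rsum_ext; intros i Hi; rewrite H; auto; ring. Qed.

Lemma core p m N A xs j :
  1 < p -> (m <= N)%nat -> all_square_submatrices_invertible m N A -> isvec N xs ->
  (j < N)%nat -> xs j <> 0 -> ~ (N - m + 1 <= supp_card N xs)%nat ->
  exists z, isvec N z /\ (forall l, (l < m)%nat -> matvec N A z l = matvec N A xs l) /\
   rsum N (fun i => powR (Rabs (z i)) p) < rsum N (fun i => powR (Rabs (xs i)) p) /\
   rsum N (fun i => z i * z i) <= rsum N (fun i => xs i * xs i).
Proof. intros Hp HmN HA Hxs Hj Hxj Hs.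
  assert (Hz : (m <= zc N xs)%nat) by (pose proof (supp_zc N xs); lia).
  destruct (choose_C N m xs Hz) as [c [Hc1 Hc2]].
  apply (descent p m N A xs j c); auto.
  apply HA; auto. intros k Hk; apply Hc2; auto. Qed.

Lemma resid_same N A x z y m :
  (forall l, (l < m)%nat -> matvec N A z l = matvec N A x l) ->
  norm2 m (resid N A z y) = norm2 m (resid N A x y).
Proof. intros H. unfold norm2. f_equal. apply rsum_ext; intros i Hi. unfold resid. rewrite H; auto. Qed.

Theorem proposition3p1 (p : R) (m N : nat) (A : nat -> nat -> R) (y : nat -> R) :
  1 < p -> (m <= N)%nat ->
  all_square_submatrices_invertible m N A -> nonzero_vec m y ->
  (* (i) min ||x||_p s.t. Ax = y *)
  (forall xs, is_optimal N (fun x => forall i, (i < m)%nat -> matvec N A x i = y i)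
                (fun x => pnorm p N x) xs ->
     (N - m + 1 <= supp_card N xs)%nat) /\
  (* (ii) min ||x||_p s.t. ||Ax - y||_2 <= eps, 0 < eps < ||y||_2 *)
  (forall eps, 0 < eps -> eps < norm2 m y ->
   forall xs, is_optimal N (fun x => norm2 m (resid N A x y) <= eps)
                (fun x => pnorm p N x) xs ->
     (N - m + 1 <= supp_card N xs)%nat) /\
  (* (iii) min 1/2 ||Ax - y||_2^2 + lambda ||x||_p^p *)
  (forall lam, 0 < lam ->
   forall xs, is_optimal N (fun _ => True)
                (fun x => / 2 * (norm2 m (resid N A x y)) ^ 2 + lam * powR (pnorm p N x) p) xs ->
     (N - m + 1 <= supp_card N xs)%nat) /\
  (* (iv) min 1/2 ||Ax - y||_2^2 + lambda1 ||x||_p^r + lambda2 ||x||_2^2, nonzero optima *)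
  (forall r lam1 lam2, 0 < r -> 0 < lam1 -> 0 <= lam2 ->
   forall xs, is_optimal N (fun _ => True)
                (fun x => / 2 * (norm2 m (resid N A x y)) ^ 2
                          + lam1 * powR (pnorm p N x) r + lam2 * (norm2 N x) ^ 2) xs ->
     nonzero_vec N xs ->
     (N - m + 1 <= supp_card N xs)%nat).
Proof.
  intros Hp HmN HA [iy [Hiy Hy]].
  assert (Hp0 : 0 < p) by lra.
  split; [|split; [|split]].
  - intros xs [Hxs [Hf Hopt]].
    destruct (Nat.le_gt_cases (N - m + 1) (supp_card N xs)) as [H|H]; auto. exfalso.
    destruct (find_nz N xs) as [[j [Hj E]]|Z].
    + destruct (core p m N A xs j Hp HmN HA Hxs Hj E ltac:(lia)) as [z [Hz [Hz1 [Hz2 _]]]].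
      assert (pnorm p N xs <= pnorm p N z). { apply Hopt; auto. intros i Hi; rewrite Hz1; auto. }
      pose proof (pnorm_lt p N xs z Hp0 Hz2). lra.
    + apply Hy. rewrite <- (Hf iy Hiy). apply matvec_zero; auto.
  - intros eps He Hey xs [Hxs [Hf Hopt]].
    destruct (Nat.le_gt_cases (N - m + 1) (supp_card N xs)) as [H|H]; auto. exfalso.
    destruct (find_nz N xs) as [[j [Hj E]]|Z].
    + destruct (core p m N A xs j Hp HmN HA Hxs Hj E ltac:(lia)) as [z [Hz [Hz1 [Hz2 _]]]].
      assert (pnorm p N xs <= pnorm p N z). { apply Hopt; auto. rewrite (resid_same N A xs z y m Hz1); auto. }
      pose proof (pnorm_lt p N xs z Hp0 Hz2). lra.
    + assert (norm2 m (resid N A xs y) = norm2 m y).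
      { unfold norm2. f_equal. apply rsum_ext; intros i Hi. unfold resid. rewrite matvec_zero; auto. ring. }
      lra.
  - intros lam Hlam xs [Hxs [_ Hopt]].
    destruct (Nat.le_gt_cases (N - m + 1) (supp_card N xs)) as [H|H]; auto. exfalso.
    destruct (find_nz N xs) as [[j [Hj E]]|Z].
    + destruct (core p m N A xs j Hp HmN HA Hxs Hj E ltac:(lia)) as [z [Hz [Hz1 [Hz2 _]]]].
      specialize (Hopt z Hz I). rewrite (resid_same N A xs z y m Hz1), !powR_pnorm in Hopt by auto.
      assert (lam * rsum N (fun i => powR (Rabs (z i)) p) < lam * rsum N (fun i => powR (Rabs (xs i)) p))
        by (apply Rmult_lt_compat_l; auto).
      lra.
    + set (Y := rsum m (fun i => y i * y i)).
      assert (HY : 0 < Y). { apply Rlt_le_trans with (y iy * y iy). nra.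
        apply (rsum_ge_term m (fun i => y i * y i)); auto. intros; nra. }
      destruct (solve_lemma m N A (fun k => k) y) as [u [Hu [Hu1 _]]].
      { intros; lia. } { apply HA; intros; lia. }
      set (K := rsum N (fun i => powR (Rabs (u i)) p)).
      assert (HK : 0 <= K) by (apply rsum_nonneg; intros; apply powR_nonneg).
      destruct (small_t p (lam * K) (Y / 2) 1 Hp ltac:(nra) ltac:(lra) ltac:(lra)) as [t [[Ht0 Ht1] Ht]].
      assert (Hz : isvec N (fun i => xs i + t * u i)).
      { intros i Hi. rewrite Hxs, Hu by auto. ring. }
      specialize (Hopt _ Hz I).
      rewrite !powR_pnorm in Hopt by auto.
      rewrite !norm2_sq in Hopt.
      rewrite (rsum_ext N (fun i => powR (Rabs (xs i)) p) (fun _ => 0)) in Hopt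
        by (intros i Hi; rewrite Z, Rabs_R0, powR_zero; auto).
      rewrite (rsum_ext N (fun i => powR (Rabs (xs i + t * u i)) p) (fun i => Rpower t p * powR (Rabs (u i)) p)) in Hopt
        by (intros i Hi; rewrite Z, Rplus_0_l, Rabs_mult, powR_mult, (Rabs_pos_eq t), powR_pos by (auto; try lra; apply Rabs_pos); auto).
      rewrite rsum_scal, rsum_zero in Hopt. fold K in Hopt.
      rewrite (rsum_ext m (fun i => resid N A xs y i * resid N A xs y i) (fun i => y i * y i)) in Hopt
        by (intros i Hi; unfold resid; rewrite matvec_zero; auto; ring).
      rewrite (rsum_ext m (fun i => resid N A (fun i => xs i + t * u i) y i * resid N A (fun i => xs i + t * u i) y i)
         (fun i => (1 - t) * (1 - t) * (y i * y i))) in Hopt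
        by (intros i Hi; unfold resid; rewrite matvec_lin, matvec_zero, Hu1; auto; ring).
      rewrite rsum_scal in Hopt. fold Y in Hopt.
      assert (Rpower t p = t * Rpower t (p - 1)).
      { replace p with (1 + (p - 1)) at 1 by ring. rewrite Rpower_plus, Rpower_1; auto. }
      rewrite H0 in Hopt.
      assert (t * (lam * K * Rpower t (p - 1)) < t * (Y / 2)) by (apply Rmult_lt_compat_l; auto).
      assert (E1 : lam * (t * Rpower t (p - 1) * K) = t * (lam * K * Rpower t (p - 1))) by ring.
      assert (E2 : / 2 * ((1 - t) * (1 - t) * Y) = / 2 * Y - t * Y + / 2 * (t * t * Y)) by field.
      assert (t * t * Y <= t * Y) by (apply Rmult_le_compat_r; [lra|nra]).
      rewrite E1, E2 in Hopt. lra.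
  - intros r lam1 lam2 Hr Hl1 Hl2 xs [Hxs [_ Hopt]] [j [Hj E]].
    destruct (Nat.le_gt_cases (N - m + 1) (supp_card N xs)) as [H|H]; auto. exfalso.
    destruct (core p m N A xs j Hp HmN HA Hxs Hj E ltac:(lia)) as [z [Hz [Hz1 [Hz2 Hz3]]]].
    specialize (Hopt z Hz I). rewrite (resid_same N A xs z y m Hz1), !norm2_sq in Hopt.
    pose proof (pnorm_lt p N xs z Hp0 Hz2).
    assert (powR (pnorm p N z) r < powR (pnorm p N xs) r) by (apply powR_lt; auto; split; auto; apply pnorm_nonneg).
    assert (lam1 * powR (pnorm p N z) r < lam1 * powR (pnorm p N xs) r) by (apply Rmult_lt_compat_l; auto).
    assert (lam2 * rsum N (fun i => z i * z i) <= lam2 * rsum N (fun i => xs i * xs i)) by (apply Rmult_le_compat_l; auto).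
    lra.
Qed.
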